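(* Let $n\ge m\ge 1$ be integers, $N=nm+n+m$, and $d\in\{1,-1\}$. Put $s_1=m(m+3)/2$ and $s_2=(n-m)(m+1)$, and define integers $x_1,\dots,x_N$ recursively as follows. For $1\le i\le s_1$, with $\alpha=\lfloor\frac{\sqrt{8i+1}-1}{2}\rfloor$, $$x_i=n+1-(-1)^{\alpha}d\,(2i-\alpha(\alpha+2)).$$ For $s_1+1\le i\le s_1+s_2$, with $\beta=\lfloor\frac{i-s_1+m}{m+1}\rfloor$ and $p=i-s_1-(\beta-1)(m+1)$, $$x_i=x_{s_1}-\beta-(-1)^{m+\beta}d\,\bigl(2p-2-m(1+(-1)^{\beta})\bigr).$$ For $s_1+s_2+1\le i\le N$, with $\gamma=\lfloor m-\sqrt{m(m+1)-2(i-s_1-s_2)+9/4}+3/2\rfloor$ and $q=i-s_1-s_2-(\gamma-1)(m+1)+\gamma(\gamma-1)/2$, $$x_i=x_{s_1+s_2}-d\bigl((-1)^{n+\gamma}(\gamma+2q-m-2)-m(-1)^n\bigr).$$ Then starting from the initial configuration $b^nOw^m$ and, for $i=1,\dots,N$, moving in step $i$ the checker at position $x_i$ into the current vacancy, every step is a legal move, the final configuration $w^mOb^n$ is reached after step $N$, and hence this is an optimal move sequence (of the minimum possible length $nm+n+m$). Moreover $d=(n+1)-x_1$ is the direction of the first move.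
   Context: The game: positions $1,\dots,n+m+1$ in a row, each holding a black checker ($b$), a white checker ($w$) or nothing, with exactly one empty position (the vacancy $O$). Initial configuration $b^nOw^m$ (vacancy at position $n+1$), final configuration $w^mOb^n$. A legal move is a slide (a checker adjacent to the vacancy moves into it) or a jump (a checker at distance two from the vacancy jumps over the checker between them into it); after moving the checker at position $x_i$, position $x_i$ becomes the new vacancy. *)

(* Defs.v *)
From Stdlib Require Import ZArith Reals List.
Open Scope Z_scope.

Inductive cell := Bk | Wt | Vac.

(** A configuration: value of each position; only positions 1..L matter,
    where L = n+m+1 is the number of positions. *)
Definition config := Z -> cell.

Definition init_config (n m : Z) : config :=
  fun p => if (p <=? n) then Bk else if (p =? n + 1) then Vac else Wt.

Definition final_config (n m : Z) : config :=
  fun p => if (p <=? m) then Wt else if (p =? m + 1) then Vac else Bk.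

Definition same_on_board (L : Z) (c c' : config) : Prop :=
  forall p, 1 <= p <= L -> c p = c' p.

Definition legal_move (L : Z) (c : config) (x : Z) (c' : config) : Prop :=
  exists v,
    1 <= v <= L /\ c v = Vac /\
    1 <= x <= L /\ c x <> Vac /\
    (Z.abs (x - v) = 1 \/ (Z.abs (x - v) = 2 /\ c ((x + v) / 2) <> Vac)) /\
    c' = (fun p => if p =? v then c x else if p =? x then Vac else c p).

Inductive legal_run (L : Z) : config -> list Z -> config -> Prop :=
| run_nil : forall c, legal_run L c nil c
| run_cons : forall c x xs c1 c2,
    legal_move L c x c1 -> legal_run L c1 xs c2 -> legal_run L c (x :: xs) c2.

Definition rfloor (r : R) : Z := Int_part r.

Definition s1 (m : Z) : Z := m * (m + 3) / 2.
Definition s2 (n m : Z) : Z := (n - m) * (m + 1).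

Definition xA (n m d i : Z) : Z :=
  let alpha := rfloor ((sqrt (IZR (8 * i + 1)) - 1) / 2)%R in
  n + 1 - (-1) ^ alpha * d * (2 * i - alpha * (alpha + 2)).

Definition xB (n m d i : Z) : Z :=
  let beta := (i - s1 m + m) / (m + 1) in
  let p := i - s1 m - (beta - 1) * (m + 1) in
  xA n m d (s1 m) - beta
    - (-1) ^ (m + beta) * d * (2 * p - 2 - m * (1 + (-1) ^ beta)).

(** x_{s1+s2}, whichever block it lies in. *)
Definition x_mid (n m d : Z) : Z :=
  if s1 m + s2 n m <=? s1 m then xA n m d (s1 m + s2 n m)
  else xB n m d (s1 m + s2 n m).

Definition xC (n m d i : Z) : Z :=
  let gamma := rfloor (IZR m
       - sqrt (IZR (m * (m + 1)) - 2 * IZR (i - s1 m - s2 n m) + 9 / 4)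
       + 3 / 2)%R in
  let q := i - s1 m - s2 n m - (gamma - 1) * (m + 1) + gamma * (gamma - 1) / 2 in
  x_mid n m d - d * ((-1) ^ (n + gamma) * (gamma + 2 * q - m - 2) - m * (-1) ^ n).

Definition xseq (n m d i : Z) : Z :=
  if i <=? s1 m then xA n m d i
  else if i <=? s1 m + s2 n m then xB n m d i
  else xC n m d i.

Definition xlist (n m d : Z) (N : nat) : list Z :=
  map (fun k => xseq n m d (Z.of_nat k)) (seq 1 N).

(* Main.v *)
Require Import Defs.
From Stdlib Require Import ZArith Reals List Lia Lra Psatz FunctionalExtensionality Bool.
Open Scope Z_scope.


Lemma run_app : forall L c xs c1 ys c2, legal_run L c xs c1 -> legal_run L c1 ys c2 ->
  legal_run L c (xs ++ ys) c2.
Proof. intros L c xs c1 ys c2 H; induction H; intros; simpl; auto. econstructor; eauto. Qed.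

Lemma run_ext : forall L c xs c1 c2, legal_run L c xs c1 -> (forall p, c1 p = c2 p) ->
  legal_run L c xs c2.
Proof. intros. assert (c1 = c2) by (apply functional_extensionality; auto). subst; auto. Qed.

Lemma run_ext_l : forall L c c' xs c1, (forall p, c p = c' p) -> legal_run L c' xs c1 ->
  legal_run L c xs c1.
Proof. intros. assert (c = c') by (apply functional_extensionality; auto). subst; auto. Qed.

Definition mv (c : config) (v x : Z) : config :=
  fun p => if p =? v then c x else if p =? x then Vac else c p.

Lemma lm_slide : forall L c v x, 1 <= v <= L -> 1 <= x <= L -> c v = Vac -> c x <> Vac ->
  Z.abs (x - v) = 1 -> legal_move L c x (mv c v x).
Proof. intros. exists v. repeat split; auto; lia. Qed.

Lemma lm_jump : forall L c v x, 1 <= v <= L -> 1 <= x <= L -> c v = Vac -> c x <> Vac ->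
  Z.abs (x - v) = 2 -> c ((x + v) / 2) <> Vac -> legal_move L c x (mv c v x).
Proof. intros. exists v. repeat split; auto; lia. Qed.

Ltac zcase := repeat match goal with
  | |- context [?a =? ?b] => destruct (Z.eqb_spec a b)
  | |- context [?a <=? ?b] => destruct (Z.leb_spec a b)
  | |- context [?a <? ?b] => destruct (Z.ltb_spec a b)
  | H : context [?a =? ?b] |- _ => destruct (Z.eqb_spec a b)
  | H : context [?a <=? ?b] |- _ => destruct (Z.leb_spec a b)
  | H : context [?a <? ?b] |- _ => destruct (Z.ltb_spec a b)
  end; cbv beta iota delta [andb orb negb] in *; try (exfalso; lia); try reflexivity.

Ltac evn := rewrite ?Z.even_sub, ?Z.even_add, ?Z.even_mul in *;
  change (Z.even 0) with true in *; change (Z.even 1) with false in *;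
  change (Z.even 2) with true in *; change (Z.even 3) with false in *;
  repeat match goal with |- context [Z.even ?x] => is_var x; destruct (Z.even x) end;
  cbv beta iota delta [Bool.eqb andb orb negb] in *; try reflexivity; try congruence.

Ltac pin p := first [
   match goal with H : p <= ?e |- _ => assert (p = e) by lia end
 | match goal with H : ?e <= p |- _ => assert (p = e) by lia end
 | match goal with H : ?e < p |- _ => assert (p = e + 1) by lia end
 | match goal with H : p < ?e |- _ => assert (p = e - 1) by lia end
 | match goal with H : p <> ?e |- _ => assert (p = e + 1) by lia end
 | match goal with H : p <> ?e |- _ => assert (p = e - 1) by lia end
 | idtac ].

Fixpoint jr (v : Z) (k : nat) : list Z :=
  match k with O => nil | S k' => (v+2) :: jr (v+2) k' end.
Definition FR (c : config) (v k : Z) : config := fun p =>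
  if (v <=? p) && (p <? v + 2*k) then (if Z.even (p - v) then Wt else Bk)
  else if p =? v + 2*k then Vac else c p.

Lemma rjumps : forall L k v c, 1 <= v -> v + 2 * Z.of_nat k <= L -> c v = Vac ->
  (forall i, 0 <= i < Z.of_nat k -> c (v + 2*i + 1) = Bk /\ c (v + 2*i + 2) = Wt) ->
  legal_run L c (jr v k) (FR c v (Z.of_nat k)).
Proof.
  intros L k; induction k as [|k IH]; intros v c H1 H2 H3 H4.
  - simpl. apply run_ext with c; [constructor|]. intros p; unfold FR.
    simpl Z.of_nat. rewrite Z.mul_0_r, Z.add_0_r. zcase; subst; auto.
  - simpl. rewrite Nat2Z.inj_succ in *.
    assert (Hb : c (v+1) = Bk /\ c (v+2) = Wt).
    { destruct (H4 0) as [A B]; [lia|]. replace (v+1) with (v + 2*0+1) by lia.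
      replace (v+2) with (v+2*0+2) by lia. auto. }
    destruct Hb as [Hb1 Hb2].
    eapply run_cons.
    + apply lm_jump with (v := v); try lia; auto; try congruence.
      replace ((v + 2 + v) / 2) with (v + 1). congruence.
      replace (v+2+v) with ((v+1)*2) by lia. rewrite Z.div_mul; lia.
    + eapply run_ext. apply IH; try lia.
      * unfold mv. zcase.
      * intros i Hi. unfold mv. destruct (H4 (i+1)) as [A B]; [lia|].
        split; zcase.
        replace (v+2+2*i+1) with (v + 2*(i+1)+1) by lia; auto.
        replace (v+2+2*i+2) with (v + 2*(i+1)+2) by lia; auto.
      * intros p. unfold FR, mv. zcase; subst; try congruence;
        try (replace (p - v) with (p - (v+2) + 2*1) by lia; rewrite Z.even_add_mul_2; reflexivity).
        all: try (replace (v + 2 - v) with 2 by lia; reflexivity).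
        all: rewrite ?Z.sub_diag; simpl; auto.
        all: try (replace (v + 2 - v) with 2 by lia; reflexivity).
        assert (p = v + 1) by lia; subst p. replace (v+1-v) with 1 by lia; simpl; auto.
Qed.

Fixpoint jl (v : Z) (k : nat) : list Z :=
  match k with O => nil | S k' => (v-2) :: jl (v-2) k' end.
Definition FL (c : config) (v k : Z) : config := fun p =>
  if (v - 2*k <? p) && (p <=? v) then (if Z.even (v - p) then Bk else Wt)
  else if p =? v - 2*k then Vac else c p.

Lemma ljumps : forall L k v c, v <= L -> 1 <= v - 2 * Z.of_nat k -> c v = Vac ->
  (forall i, 0 <= i < Z.of_nat k -> c (v - 2*i - 1) = Wt /\ c (v - 2*i - 2) = Bk) ->
  legal_run L c (jl v k) (FL c v (Z.of_nat k)).
Proof.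
  intros L k; induction k as [|k IH]; intros v c H1 H2 H3 H4.
  - simpl. apply run_ext with c; [constructor|]. intros p; unfold FL.
    simpl Z.of_nat. rewrite Z.mul_0_r, Z.sub_0_r. zcase; subst; auto.
  - simpl. rewrite Nat2Z.inj_succ in *.
    assert (Hb : c (v-1) = Wt /\ c (v-2) = Bk).
    { destruct (H4 0) as [A B]; [lia|]. replace (v-1) with (v - 2*0-1) by lia.
      replace (v-2) with (v-2*0-2) by lia. auto. }
    destruct Hb as [Hb1 Hb2].
    eapply run_cons.
    + apply lm_jump with (v := v); try lia; auto; try congruence.
      replace ((v - 2 + v) / 2) with (v - 1). congruence.
      replace (v-2+v) with ((v-1)*2) by lia. rewrite Z.div_mul; lia.
    + eapply run_ext. apply IH; try lia.
      * unfold mv. zcase.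
      * intros i Hi. unfold mv. destruct (H4 (i+1)) as [A B]; [lia|].
        split; zcase.
        replace (v-2-2*i-1) with (v - 2*(i+1)-1) by lia; auto.
        replace (v-2-2*i-2) with (v - 2*(i+1)-2) by lia; auto.
      * intros p. unfold FL, mv. zcase; subst; try congruence;
        try (replace (v - p) with (v - 2 - p + 2*1) by lia; rewrite Z.even_add_mul_2; reflexivity).
        all: rewrite ?Z.sub_diag; simpl; auto.
        all: try (replace (v - (v - 2)) with 2 by lia; reflexivity).
        assert (p = v - 1) by lia; subst p. replace (v-(v-1)) with 1 by lia; simpl; auto.
Qed.

Definition cfg (L : Z) (P Q : cell) (l a : Z) (s : bool) : config := fun p =>
  if p <=? 0 then Bk else if L <? p then Wt else
  if p <=? l then P else
  if s then (if p =? l+1 then Vac else if p <=? l + 2*a + 1 then (if Z.even (p - l) then Wt else Bk) else Q)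
  else (if p <=? l + 2*a then (if Z.even (p - l) then Bk else Wt) else if p =? l+2*a+1 then Vac else Q).

Ltac fin := unfold FR, FL, mv, cfg; zcase; subst; evn.
Ltac finp p := unfold FR, FL, mv, cfg; zcase; subst; try (pin p; subst p); evn.

Lemma BA_VL : forall L l ka, let a := Z.of_nat ka in 1 <= l -> l + 2*a + 2 <= L ->
  legal_run L (cfg L Bk Wt l a true) (l :: jr l (S ka)) (cfg L Bk Wt (l-1) (a+1) false).
Proof.
  intros L l ka a H1 H2. assert (0 <= a) by lia.
  eapply run_cons.
  - apply lm_slide with (v := l+1); try lia; fin.
  - eapply run_ext. apply rjumps; rewrite ?Nat2Z.inj_succ; fold a; try lia.
    + fin.
    + intros i Hi. split; fin.
    + intros p. rewrite Nat2Z.inj_succ. fold a. finp p.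
Qed.

Lemma BA_VR : forall L l ka, let a := Z.of_nat ka in 1 <= l -> l + 2*a + 2 <= L ->
  legal_run L (cfg L Bk Wt l a false) ((l+2*a+2) :: jl (l+2*a+2) (S ka)) (cfg L Bk Wt (l-1) (a+1) true).
Proof.
  intros L l ka a H1 H2. assert (0 <= a) by lia.
  eapply run_cons.
  - apply lm_slide with (v := l+2*a+1); try lia; fin.
  - eapply run_ext. apply ljumps; rewrite ?Nat2Z.inj_succ; fold a; try lia.
    + fin.
    + intros i Hi. split; fin.
    + intros p. rewrite Nat2Z.inj_succ. fold a. finp p.
Qed.

Lemma BB_VR : forall L l ka, let a := Z.of_nat ka in 1 <= l -> l + 2*a + 1 <= L ->
  legal_run L (cfg L Bk Bk l a false) ((l+2*a) :: jl (l+2*a) ka) (cfg L Bk Bk (l-1) a true).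
Proof.
  intros L l ka a H1 H2. assert (0 <= a) by lia.
  eapply run_cons.
  - apply lm_slide with (v := l+2*a+1); try lia; fin.
  - eapply run_ext. apply ljumps; fold a; try lia.
    + fin.
    + intros i Hi. split; fin.
    + intros p. fold a. finp p.
Qed.

Lemma BB_VL : forall L l ka, let a := Z.of_nat ka in 1 <= l -> l + 2*a + 1 <= L ->
  legal_run L (cfg L Bk Bk l a true) (l :: jr l ka) (cfg L Bk Bk (l-1) a false).
Proof.
  intros L l ka a H1 H2. assert (0 <= a) by lia.
  eapply run_cons.
  - apply lm_slide with (v := l+1); try lia; fin.
  - eapply run_ext. apply rjumps; fold a; try lia.
    + fin.
    + intros i Hi. split; fin.
    + intros p. fold a. finp p.
Qed.

Lemma BC_VR : forall L l ka, let a := Z.of_nat ka in 0 <= l -> l + 2*a + 3 <= L ->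
  legal_run L (cfg L Wt Bk l (a+1) false) ((l+2*a+2) :: jl (l+2*a+2) ka) (cfg L Wt Bk (l+1) a true).
Proof.
  intros L l ka a H1 H2. assert (0 <= a) by lia.
  eapply run_cons.
  - apply lm_slide with (v := l+2*a+3); try lia; fin.
  - eapply run_ext. apply ljumps; fold a; try lia.
    + fin.
    + intros i Hi. split; fin.
    + intros p. fold a. finp p.
Qed.

Lemma BC_VL : forall L l ka, let a := Z.of_nat ka in 0 <= l -> l + 2*a + 3 <= L ->
  legal_run L (cfg L Wt Bk l (a+1) true) ((l+2) :: jr (l+2) ka) (cfg L Wt Bk (l+1) a false).
Proof.
  intros L l ka a H1 H2. assert (0 <= a) by lia.
  eapply run_cons.
  - apply lm_slide with (v := l+1); try lia; fin.
  - eapply run_ext. apply rjumps; fold a; try lia.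
    + fin.
    + intros i Hi. split; fin.
    + intros p. fold a. finp p.
Qed.


Lemma Int_part_eq : forall (r : R) (z : Z), (IZR z <= r)%R -> (r < IZR z + 1)%R -> Int_part r = z.
Proof.
  intros r z H1 H2. destruct (base_Int_part r) as [A B].
  assert (C1 : Int_part r < z + 1).
  { apply lt_IZR. rewrite plus_IZR. simpl. lra. }
  assert (C2 : z - 1 < Int_part r).
  { apply lt_IZR. rewrite minus_IZR. simpl. lra. }
  lia.
Qed.

Lemma sqrt_ge_int : forall a b : Z, 0 <= a -> a * a <= b -> (IZR a <= sqrt (IZR b))%R.
Proof.
  intros a b H1 H2. rewrite <- (sqrt_square (IZR a)) by (apply IZR_le; lia).
  apply sqrt_le_1_alt. rewrite <- mult_IZR. apply IZR_le. lia.
Qed.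

Lemma sqrt_lt_int : forall a b : Z, 0 <= a -> 0 <= b -> b < a * a -> (sqrt (IZR b) < IZR a)%R.
Proof.
  intros a b H1 H0 H2. rewrite <- (sqrt_square (IZR a)) by (apply IZR_le; lia).
  apply sqrt_lt_1_alt. split. apply IZR_le; lia. rewrite <- mult_IZR. apply IZR_lt. lia.
Qed.

Lemma alpha_floor : forall A t i, 1 <= A -> 0 <= t <= A -> 2 * i = A * (A + 1) + 2 * t ->
  rfloor ((sqrt (IZR (8 * i + 1)) - 1) / 2)%R = A.
Proof.
  intros A t i H1 H2 H3. unfold rfloor. apply Int_part_eq.
  - assert (H : (IZR (2*A+1) <= sqrt (IZR (8*i+1)))%R) by (apply sqrt_ge_int; nia).
    rewrite (plus_IZR (2*A) 1), (mult_IZR 2 A) in H. lra.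
  - assert (H : (sqrt (IZR (8*i+1)) < IZR (2*A+3))%R) by (apply sqrt_lt_int; nia).
    rewrite (plus_IZR (2*A) 3), (mult_IZR 2 A) in H. lra.
Qed.

Lemma sqrt_gt_half : forall (x : R) (R0 : R), (0 <= x)%R -> (x * x < R0)%R -> (x < sqrt R0)%R.
Proof.
  intros x R0 H1 H2. rewrite <- (sqrt_square x) by lra. apply sqrt_lt_1_alt. split; [nra|lra].
Qed.
Lemma sqrt_le_half : forall (x : R) (R0 : R), (0 <= x)%R -> (R0 <= x * x)%R -> (sqrt R0 <= x)%R.
Proof.
  intros x R0 H1 H2. rewrite <- (sqrt_square x) by lra. apply sqrt_le_1_alt. lra.
Qed.

Ltac rzz := repeat (first [rewrite plus_IZR in * | rewrite minus_IZR in * | rewrite mult_IZR in *]).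

Lemma gamma_floor : forall m G q j, 1 <= G <= m -> 1 <= q <= m + 1 - G ->
  2 * j = 2 * (G - 1) * (m + 1) - G * (G - 1) + 2 * q ->
  rfloor (IZR m - sqrt (IZR (m * (m + 1)) - 2 * IZR j + 9 / 4) + 3 / 2)%R = G.
Proof.
  intros m G q j H1 H2 H3. unfold rfloor. apply Int_part_eq.
  - set (g := m - G).
    assert (E : (IZR (m * (m + 1)) - 2 * IZR j + 9 / 4 = IZR (4*g*g + 12*g + 17 - 8*q) / 4)%R).
    { assert (E2 : 4 * (m * (m+1)) - 8 * j + 9 = 4*g*g + 12*g + 17 - 8*q) by (unfold g; nia).
      apply (f_equal IZR) in E2. rzz. nra. }
    rewrite E.
    assert (S : (sqrt (IZR (4*g*g + 12*g + 17 - 8*q) / 4) <= IZR g + 3/2)%R).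
    { apply sqrt_le_half. assert (0 <= IZR g)%R by (apply IZR_le; unfold g; lia). lra.
      assert (Hi : 4*g*g + 12*g + 17 - 8*q <= (2*g+3)*(2*g+3)) by lia.
      apply IZR_le in Hi. rzz. nra. }
    assert (Eg : IZR g = (IZR m - IZR G)%R) by (unfold g; apply minus_IZR). lra.
  - set (g := m - G).
    assert (E : (IZR (m * (m + 1)) - 2 * IZR j + 9 / 4 = IZR (4*g*g + 12*g + 17 - 8*q) / 4)%R).
    { assert (E2 : 4 * (m * (m+1)) - 8 * j + 9 = 4*g*g + 12*g + 17 - 8*q) by (unfold g; nia).
      apply (f_equal IZR) in E2. rzz. nra. }
    rewrite E.
    assert (S : (IZR g + 1/2 < sqrt (IZR (4*g*g + 12*g + 17 - 8*q) / 4))%R).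
    { apply sqrt_gt_half. assert (0 <= IZR g)%R by (apply IZR_le; unfold g; lia). lra.
      assert (Hi : (2*g+1)*(2*g+1) < 4*g*g + 12*g + 17 - 8*q) by (unfold g in *; nia).
      apply IZR_lt in Hi. rzz. nra. }
    assert (Eg : IZR g = (IZR m - IZR G)%R) by (unfold g; apply minus_IZR). lra.
Qed.

Lemma powm1 : forall k, 0 <= k -> (-1) ^ k = if Z.even k then 1 else -1.
Proof.
  intros k Hk. pattern k; apply natlike_ind; [reflexivity| |lia].
  intros x Hx IH. rewrite Z.pow_succ_r by lia. rewrite IH, Z.even_succ, <- Z.negb_even.
  destruct (Z.even x); reflexivity.
Qed.


Lemma div2_exact : forall a b, a = 2 * b -> a / 2 = b.
Proof. intros a b ->. rewrite Z.mul_comm. apply Z.div_mul. lia. Qed.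

Lemma s1_val : forall m, 0 <= m -> 2 * s1 m = m * (m + 3).
Proof.
  intros m Hm. unfold s1. destruct (Z.Even_or_Odd m) as [[k Hk]|[k Hk]]; subst m.
  - rewrite (div2_exact _ (k * (2*k+3))) by ring. ring.
  - rewrite (div2_exact _ ((2*k+1) * (k+2))) by ring. ring.
Qed.

Lemma tri_val : forall G, G * (G - 1) = 2 * (G * (G - 1) / 2).
Proof.
  intros G. destruct (Z.Even_or_Odd G) as [[k Hk]|[k Hk]]; subst G.
  - rewrite (div2_exact _ (k * (2*k-1))) by ring. ring.
  - rewrite (div2_exact _ ((2*k+1) * k)) by ring. ring.
Qed.

Lemma xA_closed : forall n m d A t i, 1 <= A -> 0 <= t <= A -> 2 * i = A * (A + 1) + 2 * t ->
  xA n m d i = n + 1 - (-1) ^ A * d * (2 * t - A).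
Proof.
  intros n m d A t i H1 H2 H3. unfold xA. rewrite (alpha_floor A t i) by auto.
  f_equal. f_equal. nia.
Qed.

Lemma xB_closed : forall n m d B p i, 0 <= m -> 1 <= B -> 1 <= p <= m + 1 ->
  i = s1 m + (B - 1) * (m + 1) + p ->
  xB n m d i = xA n m d (s1 m) - B - (-1) ^ (m + B) * d * (2 * p - 2 - m * (1 + (-1) ^ B)).
Proof.
  intros n m d B p i H0 H1 H2 H3. unfold xB.
  assert (E : (i - s1 m + m) / (m + 1) = B).
  { symmetry. apply Z.div_unique with (p - 1). lia. subst i. ring. }
  rewrite E. f_equal. f_equal. f_equal. subst i. ring.
Qed.

Lemma xC_closed : forall n m d G q i, 1 <= G <= m -> 1 <= q <= m + 1 - G ->
  2 * (i - s1 m - s2 n m) = 2 * (G - 1) * (m + 1) - G * (G - 1) + 2 * q ->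
  xC n m d i = x_mid n m d - d * ((-1) ^ (n + G) * (G + 2 * q - m - 2) - m * (-1) ^ n).
Proof.
  intros n m d G q i H1 H2 H3. unfold xC.
  rewrite (gamma_floor m G q (i - s1 m - s2 n m)) by auto.
  assert (E : i - s1 m - s2 n m - (G - 1) * (m + 1) + G * (G - 1) / 2 = q).
  { pose proof (tri_val G). lia. }
  rewrite E. reflexivity.
Qed.

Lemma xAs1 : forall n m d, 1 <= m -> xA n m d (s1 m) = n + 1 - (-1) ^ m * d * m.
Proof.
  intros n m d Hm. rewrite (xA_closed n m d m m (s1 m)) by (try lia; rewrite s1_val; lia).
  f_equal. f_equal. lia.
Qed.

Lemma sgn_cases : forall d, d = 1 \/ d = -1 -> forall k, 0 <= k -> (-1)^k * d = 1 \/ (-1)^k * d = -1.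
Proof. intros d Hd k Hk. rewrite powm1 by lia. destruct (Z.even k); lia. Qed.

Lemma xmid_val : forall n m d, 1 <= m <= n -> x_mid n m d = m + 1 - (-1) ^ n * d * m.
Proof.
  intros n m d H. unfold x_mid. unfold s2.
  destruct (Z.leb_spec (s1 m + (n - m) * (m + 1)) (s1 m)).
  - assert (n = m) by nia. subst n. rewrite Z.sub_diag, Z.mul_0_l, Z.add_0_r. rewrite xAs1 by lia. lia.
  - rewrite (xB_closed n m d (n - m) (m + 1)) by (try nia; ring).
    rewrite xAs1 by lia.
    replace (m + (n - m)) with n by ring.
    rewrite !powm1 by lia. rewrite Z.even_sub.
    destruct (Z.even n), (Z.even m); cbv beta iota delta [Bool.eqb]; ring.
Qed.


Lemma blk_jr : forall (f : nat -> Z) s k x0 v, f s = x0 ->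
  (forall t, (t < k)%nat -> f (S s + t)%nat = v + 2 + 2 * Z.of_nat t) ->
  map f (seq s (S k)) = x0 :: jr v k.
Proof.
  intros f s k; revert s; induction k as [|k IH]; intros s x0 v H1 H2.
  - simpl. rewrite H1. reflexivity.
  - change (map f (seq s (S (S k)))) with (f s :: map f (seq (S s) (S k))).
    rewrite H1. f_equal. simpl jr. apply IH.
    + specialize (H2 0%nat). rewrite Nat.add_0_r in H2. rewrite H2 by lia. simpl. lia.
    + intros t Ht. specialize (H2 (S t)). replace (S (S s) + t)%nat with (S s + S t)%nat by lia.
      rewrite H2 by lia. rewrite Nat2Z.inj_succ. lia.
Qed.

Lemma blk_jl : forall (f : nat -> Z) s k x0 v, f s = x0 ->
  (forall t, (t < k)%nat -> f (S s + t)%nat = v - 2 - 2 * Z.of_nat t) ->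
  map f (seq s (S k)) = x0 :: jl v k.
Proof.
  intros f s k; revert s; induction k as [|k IH]; intros s x0 v H1 H2.
  - simpl. rewrite H1. reflexivity.
  - change (map f (seq s (S (S k)))) with (f s :: map f (seq (S s) (S k))).
    rewrite H1. f_equal. simpl jl. apply IH.
    + specialize (H2 0%nat). rewrite Nat.add_0_r in H2. rewrite H2 by lia. simpl. lia.
    + intros t Ht. specialize (H2 (S t)). replace (S (S s) + t)%nat with (S s + S t)%nat by lia.
      rewrite H2 by lia. rewrite Nat2Z.inj_succ. lia.
Qed.

Definition sd (db : bool) (k : Z) : bool := Bool.eqb (Z.even k) db.
Definition dd (db : bool) : Z := if db then 1 else -1.

Lemma sd_pow : forall db k, 0 <= k -> (-1) ^ k * dd db = if sd db k then 1 else -1.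
Proof. intros db k Hk. rewrite powm1 by lia. unfold sd, dd. destruct (Z.even k), db; reflexivity. Qed.

Lemma sd_succ : forall db k, sd db (k + 1) = negb (sd db k).
Proof. intros. unfold sd. rewrite Z.even_add. destruct (Z.even k), db; reflexivity. Qed.

Fixpoint cA (a : nat) : nat := match a with O => O | S a' => (cA a' + S (S a'))%nat end.

Lemma cA_val : forall a, 2 * Z.of_nat (cA a) = (Z.of_nat a + 1) * (Z.of_nat a + 2) - 2.
Proof. induction a; simpl cA; [reflexivity|]. rewrite Nat2Z.inj_add, Nat2Z.inj_succ, Nat2Z.inj_succ. lia. Qed.

Lemma xseqA : forall n m db a t, 1 <= m <= n -> 0 <= Z.of_nat a < m -> (t <= S a)%nat ->
  xseq n m (dd db) (Z.of_nat (S (cA a) + t)) =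
  if sd db (Z.of_nat a) then n - Z.of_nat a + 2 * Z.of_nat t else n + Z.of_nat a + 2 - 2 * Z.of_nat t.
Proof.
  intros n m db a t Hnm Ha Ht. pose proof (cA_val a) as E. pose proof (s1_val m) as E1.
  unfold xseq. destruct (Z.leb_spec (Z.of_nat (S (cA a) + t)) (s1 m)).
  - rewrite (xA_closed n m (dd db) (Z.of_nat a + 1) (Z.of_nat t)) by (rewrite ?Nat2Z.inj_add, ?Nat2Z.inj_succ; lia).
    rewrite sd_pow by lia. rewrite sd_succ. destruct (sd db (Z.of_nat a)); cbv beta iota delta [negb]; lia.
  - exfalso. rewrite Nat2Z.inj_add, Nat2Z.inj_succ in *. nia.
Qed.

Lemma phaseA : forall n m db a, 1 <= m <= n -> Z.of_nat a <= m ->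
  legal_run (n+m+1) (init_config n m) (map (fun k => xseq n m (dd db) (Z.of_nat k)) (seq 1 (cA a)))
    (cfg (n+m+1) Bk Wt (n - Z.of_nat a) (Z.of_nat a) (sd db (Z.of_nat a))).
Proof.
  intros n m db a Hnm. induction a as [|a IH]; intros Ha.
  - simpl. apply run_ext with (init_config n m); [constructor|].
    intros p; unfold init_config, cfg. destruct (sd db 0); zcase.
  - rewrite Nat2Z.inj_succ in Ha. simpl cA. rewrite seq_app, map_app.
    eapply run_app; [apply IH; lia|].
    replace (1 + cA a)%nat with (S (cA a)) by lia.
    assert (Hf0 : forall t, (t <= S a)%nat -> xseq n m (dd db) (Z.of_nat (S (cA a) + t)) =
      if sd db (Z.of_nat a) then n - Z.of_nat a + 2 * Z.of_nat t else n + Z.of_nat a + 2 - 2 * Z.of_nat t)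
      by (intros; apply xseqA; lia).
    destruct (sd db (Z.of_nat a)) eqn:Es.
    + rewrite (blk_jr _ (S (cA a)) (S a) (n - Z.of_nat a) (n - Z.of_nat a)).
      * eapply run_ext. apply BA_VL; lia.
        intros p. rewrite Nat2Z.inj_succ, <- Z.add_1_r, sd_succ, Es. simpl negb.
        replace (n - (Z.of_nat a + 1)) with (n - Z.of_nat a - 1) by lia. reflexivity.
      * specialize (Hf0 0%nat). rewrite Nat.add_0_r in Hf0. rewrite Hf0 by lia. lia.
      * intros t Ht. replace (S (S (cA a)) + t)%nat with (S (cA a) + S t)%nat by lia.
        rewrite Hf0 by lia. rewrite Nat2Z.inj_succ. lia.
    + rewrite (blk_jl _ (S (cA a)) (S a) (n - Z.of_nat a + 2 * Z.of_nat a + 2) (n - Z.of_nat a + 2 * Z.of_nat a + 2)).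
      * eapply run_ext. apply BA_VR; lia.
        intros p. rewrite Nat2Z.inj_succ, <- Z.add_1_r, sd_succ, Es. simpl negb.
        replace (n - (Z.of_nat a + 1)) with (n - Z.of_nat a - 1) by lia. reflexivity.
      * specialize (Hf0 0%nat). rewrite Nat.add_0_r in Hf0. rewrite Hf0 by lia. lia.
      * intros t Ht. replace (S (S (cA a)) + t)%nat with (S (cA a) + S t)%nat by lia.
        rewrite Hf0 by lia. rewrite Nat2Z.inj_succ. lia.
Qed.

Lemma xseqB : forall n m mn db b t, m = Z.of_nat mn -> 1 <= m <= n -> 0 <= Z.of_nat b < n - m -> (t <= mn)%nat ->
  xseq n m (dd db) (Z.of_nat (S (cA mn + b * S mn) + t)) =
  if sd db (m + Z.of_nat b) then n - m - Z.of_nat b + 2 * Z.of_nat t else n + m - Z.of_nat b - 2 * Z.of_nat t.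
Proof.
  intros n m mn db b t Hm Hnm Hb Ht. pose proof (cA_val mn) as E. pose proof (s1_val m) as E1.
  rewrite <- Hm in E.
  assert (Ei : Z.of_nat (S (cA mn + b * S mn) + t) = s1 m + Z.of_nat b * (m + 1) + Z.of_nat t + 1).
  { rewrite !Nat2Z.inj_add, Nat2Z.inj_succ, Nat2Z.inj_add, Nat2Z.inj_mul, Nat2Z.inj_succ. rewrite <- Hm. lia. }
  assert (Ht' : Z.of_nat t <= m) by lia.
  unfold xseq. rewrite Ei. destruct (Z.leb_spec (s1 m + Z.of_nat b * (m + 1) + Z.of_nat t + 1) (s1 m)); [lia|].
  destruct (Z.leb_spec (s1 m + Z.of_nat b * (m + 1) + Z.of_nat t + 1) (s1 m + s2 n m)).
  - rewrite (xB_closed n m (dd db) (Z.of_nat b + 1) (Z.of_nat t + 1)) by (try lia; ring).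
    rewrite xAs1 by lia. unfold sd, dd.
    rewrite !powm1 by lia. rewrite !Z.even_add.
    change (Z.even 1) with false. destruct (Z.even m), (Z.even (Z.of_nat b)), db; cbv beta iota delta [Bool.eqb]; ring.
  - exfalso. unfold s2 in *. nia.
Qed.

Lemma phaseB : forall n m mn db b, m = Z.of_nat mn -> 1 <= m <= n -> Z.of_nat b <= n - m ->
  legal_run (n+m+1) (cfg (n+m+1) Bk Bk (n - m) m (sd db m))
    (map (fun k => xseq n m (dd db) (Z.of_nat k)) (seq (S (cA mn)) (b * S mn)))
    (cfg (n+m+1) Bk Bk (n - m - Z.of_nat b) m (sd db (m + Z.of_nat b))).
Proof.
  intros n m mn db b Hm Hnm. subst m. induction b as [|b IH]; intros Hb.
  - simpl. rewrite Z.sub_0_r, Z.add_0_r. constructor.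
  - rewrite Nat2Z.inj_succ in Hb. rewrite Nat.mul_succ_l, seq_app, map_app.
    eapply run_app; [apply IH; lia|].
    replace (S (cA mn) + b * S mn)%nat with (S (cA mn + b * S mn)) by lia.
    assert (Hf0 : forall t, (t <= mn)%nat -> xseq n (Z.of_nat mn) (dd db) (Z.of_nat (S (cA mn + b * S mn) + t)) =
      if sd db (Z.of_nat mn + Z.of_nat b) then n - Z.of_nat mn - Z.of_nat b + 2 * Z.of_nat t else n + Z.of_nat mn - Z.of_nat b - 2 * Z.of_nat t)
      by (intros; apply xseqB; lia).
    destruct (sd db (Z.of_nat mn + Z.of_nat b)) eqn:Es.
    + rewrite (blk_jr _ _ mn (n - Z.of_nat mn - Z.of_nat b) (n - Z.of_nat mn - Z.of_nat b)).
      * eapply run_ext. apply BB_VL; lia.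
        intros p. rewrite Nat2Z.inj_succ, <- Z.add_1_r, Z.add_assoc, sd_succ, Es. simpl negb.
        replace (n - Z.of_nat mn - (Z.of_nat b + 1)) with (n - Z.of_nat mn - Z.of_nat b - 1) by lia. reflexivity.
      * specialize (Hf0 0%nat). rewrite Nat.add_0_r in Hf0. rewrite Hf0 by lia. lia.
      * intros t Ht. replace (S (S (cA mn + b * S mn)) + t)%nat with (S (cA mn + b * S mn) + S t)%nat by lia.
        rewrite Hf0 by lia. rewrite Nat2Z.inj_succ. lia.
    + rewrite (blk_jl _ _ mn (n - Z.of_nat mn - Z.of_nat b + 2 * Z.of_nat mn) (n - Z.of_nat mn - Z.of_nat b + 2 * Z.of_nat mn)).
      * eapply run_ext. apply BB_VR; lia.
        intros p. rewrite Nat2Z.inj_succ, <- Z.add_1_r, Z.add_assoc, sd_succ, Es. simpl negb.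
        replace (n - Z.of_nat mn - (Z.of_nat b + 1)) with (n - Z.of_nat mn - Z.of_nat b - 1) by lia. reflexivity.
      * specialize (Hf0 0%nat). rewrite Nat.add_0_r in Hf0. rewrite Hf0 by lia. lia.
      * intros t Ht. replace (S (S (cA mn + b * S mn)) + t)%nat with (S (cA mn + b * S mn) + S t)%nat by lia.
        rewrite Hf0 by lia. rewrite Nat2Z.inj_succ. lia.
Qed.

Fixpoint cC (mn g : nat) : nat := match g with O => O | S g' => (cC mn g' + (mn - g'))%nat end.

Lemma cC_val : forall mn g, (g <= mn)%nat ->
  2 * Z.of_nat (cC mn g) = 2 * Z.of_nat g * (Z.of_nat mn + 1) - Z.of_nat g * (Z.of_nat g + 1).
Proof.
  intros mn g; induction g; intros H; simpl cC; [reflexivity|].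
  rewrite Nat2Z.inj_add, Nat2Z.inj_sub, Nat2Z.inj_succ by lia. rewrite Z.mul_add_distr_l, (IHg ltac:(lia)). ring.
Qed.

Lemma xseqC : forall n m mn nb db g t, m = Z.of_nat mn -> Z.of_nat nb = n - m -> 1 <= m <= n ->
  (g < mn)%nat -> (t < mn - g)%nat ->
  xseq n m (dd db) (Z.of_nat (S (cA mn + nb * S mn + cC mn g) + t)) =
  if sd db (n + Z.of_nat g) then Z.of_nat g + 2 + 2 * Z.of_nat t else 2 * m - Z.of_nat g - 2 * Z.of_nat t.
Proof.
  intros n m mn nb db g t Hm Hnb Hnm Hg Ht. pose proof (cA_val mn) as E. pose proof (s1_val m) as E1.
  pose proof (cC_val mn g ltac:(lia)) as E2. rewrite <- Hm in E, E2.
  assert (Ht' : Z.of_nat t < m - Z.of_nat g) by lia.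
  assert (Ei : Z.of_nat (S (cA mn + nb * S mn + cC mn g) + t) = s1 m + s2 n m + Z.of_nat (cC mn g) + Z.of_nat t + 1).
  { rewrite !Nat2Z.inj_add, Nat2Z.inj_succ, !Nat2Z.inj_add, Nat2Z.inj_mul, Nat2Z.inj_succ. rewrite <- Hm, Hnb.
    unfold s2. lia. }
  unfold xseq. rewrite Ei.
  destruct (Z.leb_spec (s1 m + s2 n m + Z.of_nat (cC mn g) + Z.of_nat t + 1) (s1 m)).
  { exfalso. assert (0 <= s2 n m) by (unfold s2; apply Z.mul_nonneg_nonneg; lia). lia. }
  destruct (Z.leb_spec (s1 m + s2 n m + Z.of_nat (cC mn g) + Z.of_nat t + 1) (s1 m + s2 n m)); [lia|].
  rewrite (xC_closed n m (dd db) (Z.of_nat g + 1) (Z.of_nat t + 1)) by (try lia; nia).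
  rewrite xmid_val by lia. unfold sd, dd.
  rewrite !powm1 by lia. rewrite !Z.even_add. change (Z.even 1) with false.
  destruct (Z.even n), (Z.even (Z.of_nat g)), db; cbv beta iota delta [Bool.eqb]; ring.
Qed.

Lemma phaseC : forall n m mn nb db g, m = Z.of_nat mn -> Z.of_nat nb = n - m -> 1 <= m <= n -> (g <= mn)%nat ->
  legal_run (n+m+1) (cfg (n+m+1) Wt Bk 0 m (sd db n))
    (map (fun k => xseq n m (dd db) (Z.of_nat k)) (seq (S (cA mn + nb * S mn)) (cC mn g)))
    (cfg (n+m+1) Wt Bk (Z.of_nat g) (m - Z.of_nat g) (sd db (n + Z.of_nat g))).
Proof.
  intros n m mn nb db g Hm Hnb Hnm. subst m. induction g as [|g IH]; intros Hg.
  - simpl. rewrite Z.sub_0_r, Z.add_0_r. constructor.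
  - simpl cC. rewrite seq_app, map_app.
    eapply run_app; [apply IH; lia|].
    replace (S (cA mn + nb * S mn) + cC mn g)%nat with (S (cA mn + nb * S mn + cC mn g)) by lia.
    assert (Hf0 : forall t, (t < mn - g)%nat -> xseq n (Z.of_nat mn) (dd db) (Z.of_nat (S (cA mn + nb * S mn + cC mn g) + t)) =
      if sd db (n + Z.of_nat g) then Z.of_nat g + 2 + 2 * Z.of_nat t else 2 * Z.of_nat mn - Z.of_nat g - 2 * Z.of_nat t)
      by (intros; apply xseqC; lia).
    replace (mn - g)%nat with (S (mn - g - 1)) by lia.
    replace (Z.of_nat mn - Z.of_nat g) with (Z.of_nat (mn - g - 1) + 1) by lia.
    destruct (sd db (n + Z.of_nat g)) eqn:Es.
    + rewrite (blk_jr _ _ (mn - g - 1) (Z.of_nat g + 2) (Z.of_nat g + 2)).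
      * eapply run_ext. apply BC_VL; lia.
        intros p. rewrite Nat2Z.inj_succ, <- Z.add_1_r, Z.add_assoc, sd_succ, Es. simpl negb.
        replace (Z.of_nat (mn - g - 1)) with (Z.of_nat mn - (Z.of_nat g + 1)) by lia. reflexivity.
      * specialize (Hf0 0%nat). rewrite Nat.add_0_r in Hf0. rewrite Hf0 by lia. lia.
      * intros t Ht. replace (S (S (cA mn + nb * S mn + cC mn g)) + t)%nat with (S (cA mn + nb * S mn + cC mn g) + S t)%nat by lia.
        rewrite Hf0 by lia. rewrite Nat2Z.inj_succ. lia.
    + rewrite (blk_jl _ _ (mn - g - 1) (Z.of_nat g + 2 * Z.of_nat (mn - g - 1) + 2) (Z.of_nat g + 2 * Z.of_nat (mn - g - 1) + 2)).
      * eapply run_ext. apply BC_VR; lia.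
        intros p. rewrite Nat2Z.inj_succ, <- Z.add_1_r, Z.add_assoc, sd_succ, Es. simpl negb.
        replace (Z.of_nat (mn - g - 1)) with (Z.of_nat mn - (Z.of_nat g + 1)) by lia. reflexivity.
      * specialize (Hf0 0%nat). rewrite Nat.add_0_r in Hf0. rewrite Hf0 by lia. lia.
      * intros t Ht. replace (S (S (cA mn + nb * S mn + cC mn g)) + t)%nat with (S (cA mn + nb * S mn + cC mn g) + S t)%nat by lia.
        rewrite Hf0 by lia. rewrite Nat2Z.inj_succ. lia.
Qed.


Lemma sim_ok : forall n m d, 1 <= m -> m <= n -> (d = 1 \/ d = -1) ->
  exists c, legal_run (n + m + 1) (init_config n m) (xlist n m d (Z.to_nat (n * m + n + m))) c /\
            same_on_board (n + m + 1) c (final_config n m).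
Proof.
  intros n m d H1 H2 Hd.
  destruct (Z_of_nat_complete m) as [mn Hm]; [lia|].
  destruct (Z_of_nat_complete (n - m)) as [nb Hnb]; [lia|].
  set (db := d =? 1).
  assert (Ed : d = dd db) by (unfold db, dd; destruct Hd; subst; reflexivity).
  assert (EN : Z.to_nat (n * m + n + m) = (cA mn + nb * S mn + cC mn mn)%nat).
  { pose proof (cA_val mn). pose proof (cC_val mn mn (le_n _)).
    apply Nat2Z.inj. rewrite Z2Nat.id by nia.
    rewrite !Nat2Z.inj_add, Nat2Z.inj_mul, Nat2Z.inj_succ. rewrite <- Hm in *.
    assert (n = Z.of_nat nb + m) by lia. subst n. lia. }
  exists (cfg (n+m+1) Wt Bk m 0 (sd db (n + m))).
  split.
  - unfold xlist. rewrite EN, !seq_app, !map_app, <- app_assoc. rewrite Ed.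
    eapply run_app. { rewrite Hm. apply phaseA; lia. }
    rewrite <- Hm.
    eapply run_app.
    { eapply run_ext_l; [|apply (phaseB n m mn db nb); lia].
      intros p. rewrite Hm. unfold cfg. zcase. }
    change (1 + (cA mn + nb * S mn))%nat with (S (cA mn + nb * S mn)).
    eapply run_ext; [eapply run_ext_l; [|apply (phaseC n m mn nb db mn); lia]|].
    + intros p. rewrite <- Hnb. replace (n - m - (n - m)) with 0 by lia.
      replace (m + (n - m)) with n by lia. unfold cfg. zcase.
    + intros p. rewrite <- Hm. replace (m - m) with 0 by lia. reflexivity.
  - intros p Hp. unfold cfg, final_config.
    destruct (sd db (n + m)); zcase.
Qed.


Definition ind (k x : cell) : Z :=
  match k, x with Bk, Bk => 1 | Wt, Wt => 1 | Vac, Vac => 1 | _, _ => 0 end.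

Fixpoint cntn (k : cell) (c : config) (j : nat) : Z :=
  match j with O => 0 | S j' => cntn k c j' + ind k (c (Z.of_nat (S j'))) end.
Definition cnt (k : cell) (c : config) (p : Z) : Z := cntn k c (Z.to_nat p).

Lemma cnt_0 : forall k c p, p <= 0 -> cnt k c p = 0.
Proof. intros. unfold cnt. replace (Z.to_nat p) with O by lia. reflexivity. Qed.

Lemma cnt_S : forall k c p, 1 <= p -> cnt k c p = cnt k c (p - 1) + ind k (c p).
Proof.
  intros k c p H. unfold cnt. replace (Z.to_nat p) with (S (Z.to_nat (p - 1))) by lia.
  simpl cntn. f_equal. f_equal. f_equal. lia.
Qed.

Lemma cnt_nonneg : forall k c p, 0 <= cnt k c p.
Proof.
  intros k c p. unfold cnt. induction (Z.to_nat p); simpl; [lia|].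
  destruct k, (c (Z.pos (Pos.of_succ_nat n))); simpl; lia.
Qed.

Lemma cnt_ext : forall k c c' p, (forall q, 1 <= q <= p -> c q = c' q) -> cnt k c p = cnt k c' p.
Proof.
  intros k c c' p H. destruct (Z_le_gt_dec p 0); [rewrite !cnt_0; auto|].
  assert (0 <= p) by lia. revert H. pattern p. apply natlike_ind; [intros; rewrite !cnt_0; lia| |lia].
  intros q Hq IH H. rewrite !(cnt_S _ _ (Z.succ q)) by lia.
  replace (Z.succ q - 1) with q by lia. rewrite IH by (intros; apply H; lia).
  rewrite H by lia. reflexivity.
Qed.

Lemma cnt_mv : forall k c v x p, k <> Vac -> 1 <= v -> 1 <= x -> v <> x -> c v = Vac -> 0 <= p ->
  cnt k (mv c v x) p = cnt k c p + (if v <=? p then ind k (c x) else 0) - (if x <=? p then ind k (c x) else 0).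
Proof.
  intros k c v x p Hk Hv Hx Hvx Hcv Hp. pattern p. apply natlike_ind; [| |lia].
  - rewrite !cnt_0 by lia. zcase.
  - intros q Hq IH. rewrite !(cnt_S _ _ (Z.succ q)) by lia. replace (Z.succ q - 1) with q by lia.
    rewrite IH. unfold mv. zcase; subst; rewrite ?Hcv; destruct k; simpl; try lia;
    try (assert (v = x) by lia; contradiction). all: congruence.
Qed.

Fixpoint exn (f : Z -> bool) (a : Z) (j : nat) : bool :=
  match j with O => false | S j' => f a || exn f (a + 1) j' end.

Lemma exn_spec : forall f j a, exn f a j = true <-> exists i, a <= i < a + Z.of_nat j /\ f i = true.
Proof.
  intros f j; induction j as [|j IH]; intros a; simpl.
  - split; [discriminate|]. intros [i [H _]]. lia.
  - rewrite orb_true_iff, IH. split.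
    + intros [H|[i [H1 H2]]]; [exists a; split; [lia|auto]|exists i; split; [lia|auto]].
    + intros [i [H1 H2]]. destruct (Z.eq_dec i a); [subst; left; auto|right; exists i; split; [lia|auto]].
Qed.

Fixpoint sumn (f : Z -> Z) (a : Z) (j : nat) : Z :=
  match j with O => 0 | S j' => f a + sumn f (a + 1) j' end.

Lemma sumn_le : forall f g j a, (forall i, a <= i < a + Z.of_nat j -> f i <= g i) -> sumn f a j <= sumn g a j.
Proof.
  intros f g j; induction j; intros a H; cbn [sumn]; [lia|].
  assert (f a <= g a) by (apply H; lia). assert (sumn f (a+1) j <= sumn g (a+1) j) by (apply IHj; intros; apply H; lia). lia.
Qed.

Lemma sumn_add : forall f g j a, sumn (fun i => f i + g i) a j = sumn f a j + sumn g a j.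
Proof. intros f g j; induction j; intros a; cbn [sumn]; [lia|]. rewrite IHj. lia. Qed.

Lemma sumn_ext : forall f g j a, (forall i, a <= i < a + Z.of_nat j -> f i = g i) -> sumn f a j = sumn g a j.
Proof.
  intros f g j; induction j; intros a H; cbn [sumn]; [lia|].
  rewrite H by lia. rewrite (IHj (a+1)); [reflexivity|]. intros; apply H; lia.
Qed.

Lemma sumn_const : forall j a, sumn (fun _ => 1) a j = Z.of_nat j.
Proof. intros j; induction j; intros a; cbn [sumn]; [reflexivity|]. rewrite IHj, Nat2Z.inj_succ. lia. Qed.

Lemma sumn_zero : forall f j a, (forall i, a <= i < a + Z.of_nat j -> f i = 0) -> sumn f a j = 0.
Proof. intros f j; induction j; intros a H; cbn [sumn]; [lia|]. rewrite H by lia. rewrite IHj; [lia|]. intros; apply H; lia. Qed.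

Lemma sumn_single : forall u j a, sumn (fun i => if i =? u then 1 else 0) a j =
  if (a <=? u) && (u <? a + Z.of_nat j) then 1 else 0.
Proof.
  intros u j; induction j; intros a; cbn [sumn].
  - zcase.
  - rewrite IHj. zcase.
Qed.

Lemma sumn_nonneg : forall f j a, (forall i, 0 <= f i) -> 0 <= sumn f a j.
Proof. intros f j; induction j; intros a H; cbn [sumn]; [lia|]. specialize (IHj (a+1) H). specialize (H a). lia. Qed.


Definition inv (L : Z) (c : config) (X Y : Z) : bool :=
  exn (fun p => (Y <=? cnt Wt c p) && (cnt Bk c p <? X)) 0 (S (Z.to_nat L)).

Lemma inv_spec : forall L c X Y, 0 <= L -> (inv L c X Y = true <->
  exists p, 0 <= p <= L /\ Y <= cnt Wt c p /\ cnt Bk c p < X).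
Proof.
  intros L c X Y HL. unfold inv. rewrite exn_spec. split.
  - intros [p [H1 H2]]. apply andb_true_iff in H2. destruct H2 as [H2 H3].
    apply Z.leb_le in H2. apply Z.ltb_lt in H3. exists p. split; [lia|auto].
  - intros [p [H1 [H2 H3]]]. exists p. split; [lia|]. apply andb_true_iff. split.
    apply Z.leb_le; auto. apply Z.ltb_lt; auto.
Qed.

Lemma inv_eq_by : forall L c c' X Y, 0 <= L ->
  (forall p, 0 <= p <= L -> Y <= cnt Wt c p -> cnt Bk c p < X ->
     exists q, 0 <= q <= L /\ Y <= cnt Wt c' q /\ cnt Bk c' q < X) ->
  (forall p, 0 <= p <= L -> Y <= cnt Wt c' p -> cnt Bk c' p < X ->
     exists q, 0 <= q <= L /\ Y <= cnt Wt c q /\ cnt Bk c q < X) ->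
  inv L c' X Y = inv L c X Y.
Proof.
  intros L c c' X Y HL H1 H2. destruct (inv L c X Y) eqn:E1; destruct (inv L c' X Y) eqn:E2; auto.
  - exfalso. apply (inv_spec L c X Y HL) in E1. destruct E1 as [p [A [B C]]].
    destruct (H1 p A B C) as [q Hq]. assert (inv L c' X Y = true) by (apply inv_spec; auto; exists q; auto). congruence.
  - exfalso. apply (inv_spec L c' X Y HL) in E2. destruct E2 as [p [A [B C]]].
    destruct (H2 p A B C) as [q Hq]. assert (inv L c X Y = true) by (apply inv_spec; auto; exists q; auto). congruence.
Qed.

Definition lev (c : config) (v : Z) : Z := cnt Bk c v - cnt Wt c v.

Ltac rw_mv HB HW := repeat match goal with
  | |- context [cnt Bk (mv ?c ?v ?x) ?q] => rewrite (HB q) by lia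
  | |- context [cnt Wt (mv ?c ?v ?x) ?q] => rewrite (HW q) by lia
  | H : context [cnt Bk (mv ?c ?v ?x) ?q] |- _ => rewrite (HB q) in H by lia
  | H : context [cnt Wt (mv ?c ?v ?x) ?q] |- _ => rewrite (HW q) in H by lia
  end.

Ltac tq q HB HW := exists q; split; [lia|]; rw_mv HB HW; zcase; split; lia.

Ltac trans v p HB HW :=
  let Hc := fresh "Hc" in
  assert (Hc : p < v - 3 \/ p = v - 3 \/ p = v - 2 \/ p = v - 1 \/ p = v \/ p = v + 1 \/ p = v + 2 \/ v + 2 < p) by lia;
  destruct Hc as [Hc|[Hc|[Hc|[Hc|[Hc|[Hc|[Hc|Hc]]]]]]]; try subst p;
  first [ tq p HB HW | tq (v-3) HB HW | tq (v-2) HB HW | tq (v-1) HB HW | tq v HB HW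
        | tq (v+1) HB HW | tq (v+2) HB HW ].

Lemma ind_cases : forall x, x <> Vac -> (ind Bk x = 1 /\ ind Wt x = 0) \/ (ind Bk x = 0 /\ ind Wt x = 1).
Proof. intros [| |] H; simpl; auto; congruence. Qed.

Ltac setup c v x HB HW :=
  assert (HB : forall p, 0 <= p -> cnt Bk (mv c v x) p =
      cnt Bk c p + (if v <=? p then ind Bk (c x) else 0) - (if x <=? p then ind Bk (c x) else 0))
    by (intros; apply cnt_mv; auto; try lia; discriminate);
  assert (HW : forall p, 0 <= p -> cnt Wt (mv c v x) p =
      cnt Wt c p + (if v <=? p then ind Wt (c x) else 0) - (if x <=? p then ind Wt (c x) else 0))
    by (intros; apply cnt_mv; auto; try lia; discriminate).

Ltac recs c q := let H1 := fresh in let H2 := fresh in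
  assert (H1 := cnt_S Bk c q ltac:(lia)); assert (H2 := cnt_S Wt c q ltac:(lia)).

Lemma cnt_S' : forall k c q q', 1 <= q -> q' = q - 1 -> cnt k c q = cnt k c q' + ind k (c q).
Proof. intros. subst. apply cnt_S; auto. Qed.

Ltac recs2 c q q' := let H1 := fresh in let H2 := fresh in
  assert (H1 := cnt_S' Bk c q q' ltac:(lia) ltac:(lia)); assert (H2 := cnt_S' Wt c q q' ltac:(lia) ltac:(lia)).

Lemma cnt_vac : forall k c v v', k <> Vac -> c v = Vac -> 1 <= v -> v' = v - 1 -> cnt k c v = cnt k c v'.
Proof. intros k c v v' Hk H Hv E. subst. rewrite cnt_S by lia. rewrite H. destruct k; simpl; try lia; congruence. Qed.

Ltac vrec c v v' := let H1 := fresh in let H2 := fresh in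
  assert (H1 := cnt_vac Bk c v v' ltac:(discriminate) ltac:(assumption) ltac:(lia) ltac:(lia));
  assert (H2 := cnt_vac Wt c v v' ltac:(discriminate) ltac:(assumption) ltac:(lia) ltac:(lia)).

Lemma case_sl : forall L c v, 2 <= v <= L -> c v = Vac -> c (v-1) <> Vac ->
  forall X Y, inv L (mv c v (v-1)) X Y = inv L c X Y.
Proof.
  intros L c v Hv Hcv Hx X Y. setup c v (v-1) HB HW. vrec c v (v-1). recs2 c (v-1) (v-2).
  destruct (ind_cases _ Hx) as [[E1 E2]|[E1 E2]]; rewrite E1, E2 in *;
  apply inv_eq_by; try lia; intros p Hp Hw1 Hb1; trans v p HB HW.
Qed.

Lemma case_sr : forall L c v, 1 <= v -> v + 1 <= L -> c v = Vac -> c (v+1) <> Vac ->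
  forall X Y, inv L (mv c v (v+1)) X Y = inv L c X Y.
Proof.
  intros L c v Hv HvL Hcv Hx X Y. setup c v (v+1) HB HW. vrec c v (v-1). recs2 c (v+1) v.
  destruct (ind_cases _ Hx) as [[E1 E2]|[E1 E2]]; rewrite E1, E2 in *;
  apply inv_eq_by; try lia; intros p Hp Hw1 Hb1; trans v p HB HW.
Qed.

Lemma cell_eq_dec : forall a b : cell, {a = b} + {a <> b}.
Proof. decide equality. Defined.

Lemma cell_cases : forall x, x <> Vac -> x = Bk \/ x = Wt.
Proof. intros [| |] H; auto; congruence. Qed.

Lemma case_jl : forall L c v, 3 <= v <= L -> c v = Vac -> c (v-2) <> Vac -> c (v-1) <> Vac ->
  forall X Y, (c (v-1) = c (v-2) \/ X <> cnt Bk c (v-3) + 1 \/ Y <> cnt Wt c (v-3) + 1) ->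
  inv L (mv c v (v-2)) X Y = inv L c X Y.
Proof.
  intros L c v Hv Hcv Hx Hj X Y Hex. setup c v (v-2) HB HW. vrec c v (v-1).
  recs2 c (v-1) (v-2). recs2 c (v-2) (v-3).
  destruct (cell_cases _ Hx) as [E1|E1]; destruct (cell_cases _ Hj) as [E2|E2];
  rewrite E1, E2 in *; simpl ind in *;
  (match type of Hex with ?a = ?a \/ _ => clear Hex | _ = _ \/ _ => destruct Hex as [Hex|Hex]; [discriminate|] end);
  apply inv_eq_by; try lia; intros p Hp Hw1 Hb1; destruct (Z_le_gt_dec Y (cnt Wt c (v-3))); trans v p HB HW.
Qed.

Lemma case_jr : forall L c v, 1 <= v -> v + 2 <= L -> c v = Vac -> c (v+2) <> Vac -> c (v+1) <> Vac ->
  forall X Y, (c (v+1) = c (v+2) \/ X <> cnt Bk c v + 1 \/ Y <> cnt Wt c v + 1) ->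
  inv L (mv c v (v+2)) X Y = inv L c X Y.
Proof.
  intros L c v Hv HvL Hcv Hx Hj X Y Hex. setup c v (v+2) HB HW. vrec c v (v-1).
  recs2 c (v+1) v. recs2 c (v+2) (v+1).
  destruct (cell_cases _ Hx) as [E1|E1]; destruct (cell_cases _ Hj) as [E2|E2];
  rewrite E1, E2 in *; simpl ind in *;
  (match type of Hex with ?a = ?a \/ _ => clear Hex | _ = _ \/ _ => destruct Hex as [Hex|Hex]; [discriminate|] end);
  apply inv_eq_by; try lia; intros p Hp Hw1 Hb1; destruct (Z_le_gt_dec Y (cnt Wt c v)); trans v p HB HW.
Qed.


Definition noninv (n m L : Z) (c : config) : Z :=
  sumn (fun X => sumn (fun Y => if inv L c X Y then 0 else 1) 1 (Z.to_nat m)) 1 (Z.to_nat n).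
Definition exw (n m L : Z) (c : config) (l : Z) : bool :=
  exn (fun X => exn (fun Y => (X - Y =? l) && negb (inv L c X Y)) 1 (Z.to_nat m)) 1 (Z.to_nat n).
Definition inA (n m L : Z) (c : config) (v l : Z) : bool :=
  (l =? lev c v) || (l =? -m) || exw n m L c l.
Definition Acount (n m L : Z) (c : config) (v : Z) : Z :=
  sumn (fun l => if inA n m L c v l then 1 else 0) (-m) (Z.to_nat (n + m + 1)).
Definition Psi (n m L : Z) (c : config) (v : Z) : Z := noninv n m L c + Acount n m L c v.

Lemma exw_spec : forall n m L c l, exw n m L c l = true <->
  exists X Y, 1 <= X <= n /\ 1 <= Y <= m /\ X - Y = l /\ inv L c X Y = false.
Proof.
  intros n m L c l. unfold exw. rewrite exn_spec. split.
  - intros [X [HX H]]. rewrite exn_spec in H. destruct H as [Y [HY H]].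
    apply andb_true_iff in H. destruct H as [H1 H2]. apply Z.eqb_eq in H1. apply negb_true_iff in H2.
    exists X, Y. repeat split; auto; lia.
  - intros [X [Y [HX [HY [H1 H2]]]]]. exists X. split; [lia|]. apply exn_spec. exists Y. split; [lia|].
    apply andb_true_iff. split. apply Z.eqb_eq; auto. apply negb_true_iff; auto.
Qed.

Lemma sumn_single_le : forall u j a, sumn (fun i => if i =? u then 1 else 0) a j <= 1.
Proof. intros. rewrite sumn_single. zcase; lia. Qed.

Lemma Psi_same : forall n m L c c' v x, (forall X Y, inv L c' X Y = inv L c X Y) ->
  Psi n m L c v <= Psi n m L c' x + 1.
Proof.
  intros n m L c c' v x H. unfold Psi.
  assert (E : noninv n m L c' = noninv n m L c).
  { unfold noninv. apply sumn_ext. intros X _. apply sumn_ext. intros Y _. rewrite H. reflexivity. }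
  assert (E2 : forall l, exw n m L c' l = exw n m L c l).
  { intros l. unfold exw. f_equal. apply functional_extensionality. intros X. f_equal.
    apply functional_extensionality. intros Y. rewrite H. reflexivity. }
  assert (A : Acount n m L c v <= Acount n m L c' x + 1).
  { unfold Acount. eapply Z.le_trans.
    - apply (sumn_le _ (fun l => (if inA n m L c' x l then 1 else 0) + (if l =? lev c v then 1 else 0))).
      intros l _. unfold inA. rewrite E2. destruct (l =? lev c v), (l =? lev c' x), (l =? -m), (exw n m L c l); simpl; lia.
    - rewrite sumn_add. pose proof (sumn_single_le (lev c v) (Z.to_nat (n + m + 1)) (-m)). lia. }
  lia.
Qed.

Lemma Psi_diff : forall n m L c c' v x X0 Y0, lev c' x = lev c v -> X0 - Y0 = lev c v ->
  (forall X Y, (X <> X0 \/ Y <> Y0) -> inv L c' X Y = inv L c X Y) ->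
  Psi n m L c v <= Psi n m L c' x + 1.
Proof.
  intros n m L c c' v x X0 Y0 Hl HX H. unfold Psi.
  assert (N : noninv n m L c <= noninv n m L c' + 1).
  { unfold noninv. eapply Z.le_trans.
    - apply (sumn_le _ (fun X => sumn (fun Y => if inv L c' X Y then 0 else 1) 1 (Z.to_nat m)
                 + (if X =? X0 then 1 else 0))).
      intros X _. destruct (Z.eqb_spec X X0).
      + eapply Z.le_trans.
        * apply (sumn_le _ (fun Y => (if inv L c' X Y then 0 else 1) + (if Y =? Y0 then 1 else 0))).
          intros Y _. destruct (Z.eqb_spec Y Y0).
          -- destruct (inv L c' X Y), (inv L c X Y); lia.
          -- rewrite H by auto. destruct (inv L c X Y); lia.
        * rewrite sumn_add. pose proof (sumn_single_le Y0 (Z.to_nat m) 1). lia.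
      + rewrite Z.add_0_r. apply Z.eq_le_incl. apply sumn_ext. intros Y _. rewrite H by auto. reflexivity.
    - rewrite sumn_add. pose proof (sumn_single_le X0 (Z.to_nat n) 1). lia. }
  assert (A : Acount n m L c v <= Acount n m L c' x).
  { unfold Acount. apply sumn_le. intros l _. unfold inA.
    destruct (Z.eqb_spec l (lev c v)); [rewrite e, Hl, Z.eqb_refl; simpl; lia|].
    destruct (Z.eqb_spec l (-m)); [rewrite orb_true_r; simpl; destruct (l =? lev c' x); simpl; lia|].
    simpl. destruct (exw n m L c l) eqn:Ew; [|destruct (l =? lev c' x), (exw n m L c' l); simpl; lia].
    apply exw_spec in Ew. destruct Ew as [X [Y [H1 [H2 [H3 H4]]]]].
    destruct (Z.eq_dec X X0); destruct (Z.eq_dec Y Y0).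
    - subst. exfalso. lia.
    - assert (exw n m L c' l = true) by (apply exw_spec; exists X, Y; rewrite H by auto; auto).
      rewrite H0, orb_true_r. lia.
    - assert (exw n m L c' l = true) by (apply exw_spec; exists X, Y; rewrite H by auto; auto).
      rewrite H0, orb_true_r. lia.
    - assert (exw n m L c' l = true) by (apply exw_spec; exists X, Y; rewrite H by auto; auto).
      rewrite H0, orb_true_r. lia. }
  lia.
Qed.


Definition valid (L : Z) (c : config) : Prop :=
  forall p q, 1 <= p <= L -> 1 <= q <= L -> c p = Vac -> c q = Vac -> p = q.

Lemma step_psi : forall n m L c v x c', valid L c -> 1 <= v <= L -> c v = Vac -> legal_move L c x c' ->
  1 <= x <= L /\ c' x = Vac /\ valid L c' /\ Psi n m L c v <= Psi n m L c' x + 1.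
Proof.
  intros n m L c v x c' Hval Hv Hcv Hm.
  destruct Hm as [v' [Hv' [Hcv' [Hx [Hcx [Hmv Hc']]]]]].
  assert (v' = v) by (apply (Hval v' v); auto). subst v'.
  assert (Hvx : v <> x) by (intro; subst; congruence).
  assert (Ec : c' = mv c v x) by (rewrite Hc'; reflexivity). subst c'.
  split; [lia|]. split; [unfold mv; zcase|]. split.
  { intros p q Hp Hq E1 E2. unfold mv in E1, E2. zcase; try congruence.
    all: try (assert (p = v) by (apply Hval; auto); lia); try (assert (q = v) by (apply Hval; auto); lia);
      try (apply Hval; auto). }
  destruct Hmv as [Habs|[Habs Hmid]].
  - apply Psi_same. intros X Y.
    destruct (Z.eqb_spec x (v - 1)).
    + subst x. apply case_sl; auto; lia.
    + assert (x = v + 1) by lia. subst x. apply case_sr; auto; lia.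
  - destruct (Z.eqb_spec x (v - 2)).
    + subst x. replace ((v - 2 + v) / 2) with (v - 1) in Hmid
        by (replace (v - 2 + v) with ((v - 1) * 2) by lia; rewrite Z.div_mul; lia).
      destruct (cell_eq_dec (c (v-1)) (c (v-2))) as [Eq|Neq].
      * apply Psi_same. intros X Y. apply case_jl; auto; lia.
      * apply (Psi_diff _ _ _ _ _ _ _ (cnt Bk c (v-3) + 1) (cnt Wt c (v-3) + 1)).
        -- unfold lev. setup c v (v-2) HB HW. rewrite HB, HW by lia. vrec c v (v-1).
           recs2 c (v-1) (v-2). recs2 c (v-2) (v-3).
           destruct (cell_cases _ Hcx) as [E1|E1]; destruct (cell_cases _ Hmid) as [E2|E2];
           rewrite ?E1, ?E2 in *; try congruence; simpl ind in *; zcase; lia.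
        -- unfold lev. vrec c v (v-1). recs2 c (v-1) (v-2). recs2 c (v-2) (v-3).
           destruct (cell_cases _ Hcx) as [E1|E1]; destruct (cell_cases _ Hmid) as [E2|E2];
           rewrite ?E1, ?E2 in *; try congruence; simpl ind in *; lia.
        -- intros X Y HXY. apply case_jl; auto; lia.
    + assert (x = v + 2) by lia. subst x.
      replace ((v + 2 + v) / 2) with (v + 1) in Hmid
        by (replace (v + 2 + v) with ((v + 1) * 2) by lia; rewrite Z.div_mul; lia).
      destruct (cell_eq_dec (c (v+1)) (c (v+2))) as [Eq|Neq].
      * apply Psi_same. intros X Y. apply case_jr; auto; lia.
      * apply (Psi_diff _ _ _ _ _ _ _ (cnt Bk c v + 1) (cnt Wt c v + 1)).
        -- unfold lev. setup c v (v+2) HB HW. rewrite HB, HW by lia. vrec c v (v-1).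
           recs2 c (v+1) v. recs2 c (v+2) (v+1).
           destruct (cell_cases _ Hcx) as [E1|E1]; destruct (cell_cases _ Hmid) as [E2|E2];
           rewrite ?E1, ?E2 in *; try congruence; simpl ind in *; zcase; lia.
        -- unfold lev. lia.
        -- intros X Y HXY. apply case_jr; auto; lia.
Qed.

Lemma run_psi : forall n m L c xs c2, legal_run L c xs c2 -> forall v, valid L c -> 1 <= v <= L -> c v = Vac ->
  exists v2, 1 <= v2 <= L /\ c2 v2 = Vac /\ valid L c2 /\
    Psi n m L c v <= Psi n m L c2 v2 + Z.of_nat (length xs).
Proof.
  intros n m L c xs c2 H. induction H as [c|c x xs c1 c2 Hm Hr IH]; intros v Hval Hv Hcv.
  - exists v. simpl. repeat split; auto; lia.
  - destruct (step_psi n m L c v x c1 Hval Hv Hcv Hm) as [Hx [Hc1 [Hval1 HP]]].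
    destruct (IH x Hval1 Hx Hc1) as [v2 [A [B [C D]]]].
    exists v2. split; [lia|]. split; [auto|]. split; [auto|]. change (length (x :: xs)) with (S (length xs)). rewrite Nat2Z.inj_succ. lia.
Qed.

Lemma sumn_constk : forall k j a, sumn (fun _ => k) a j = k * Z.of_nat j.
Proof. intros k j; induction j; intros a; cbn [sumn]; [lia|]. rewrite IHj, Nat2Z.inj_succ. lia. Qed.

Lemma cnt_init : forall n m p, 0 <= n -> 0 <= p ->
  cnt Bk (init_config n m) p = Z.min p n /\ cnt Wt (init_config n m) p = Z.max 0 (p - n - 1).
Proof.
  intros n m p Hn Hp. pattern p. apply natlike_ind; [| |lia].
  - rewrite !cnt_0 by lia. lia.
  - intros q Hq [IH1 IH2]. rewrite !(cnt_S _ _ (Z.succ q)) by lia. replace (Z.succ q - 1) with q by lia.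
    rewrite IH1, IH2. unfold init_config. zcase; simpl; lia.
Qed.

Lemma cnt_fin0 : forall n m p, 0 <= m -> 0 <= p ->
  cnt Wt (final_config n m) p = Z.min p m /\ cnt Bk (final_config n m) p = Z.max 0 (p - m - 1).
Proof.
  intros n m p Hm Hp. pattern p. apply natlike_ind; [| |lia].
  - rewrite !cnt_0 by lia. lia.
  - intros q Hq [IH1 IH2]. rewrite !(cnt_S _ _ (Z.succ q)) by lia. replace (Z.succ q - 1) with q by lia.
    rewrite IH1, IH2. unfold final_config. zcase; simpl; lia.
Qed.

Lemma cnt_fin : forall n m c p, 0 <= m -> 0 <= p <= n + m + 1 -> same_on_board (n + m + 1) c (final_config n m) ->
  cnt Wt c p = Z.min p m /\ cnt Bk c p = Z.max 0 (p - m - 1).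
Proof.
  intros n m c p Hm Hp Hs. rewrite !(cnt_ext _ c (final_config n m) p) by (intros; apply Hs; lia).
  apply cnt_fin0; lia.
Qed.

Lemma Psi_init : forall n m, 1 <= m <= n ->
  Psi n m (n + m + 1) (init_config n m) (n + 1) = n * m + n + m + 1.
Proof.
  intros n m Hnm. unfold Psi.
  assert (Hinv : forall X Y, 1 <= X <= n -> 1 <= Y <= m -> inv (n + m + 1) (init_config n m) X Y = false).
  { intros X Y HX HY. destruct (inv _ _ X Y) eqn:E; auto. apply inv_spec in E; [|lia].
    destruct E as [p [Hp [H1 H2]]]. destruct (cnt_init n m p ltac:(lia) ltac:(lia)) as [A B]. lia. }
  assert (N : noninv n m (n + m + 1) (init_config n m) = n * m).
  { unfold noninv. rewrite (sumn_ext _ (fun _ => m)).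
    - rewrite sumn_constk. lia.
    - intros X HX. rewrite (sumn_ext _ (fun _ => 1)). rewrite sumn_constk. lia.
      intros Y HY. rewrite Hinv by lia. reflexivity. }
  assert (A : Acount n m (n + m + 1) (init_config n m) (n + 1) = n + m + 1).
  { unfold Acount. rewrite (sumn_ext _ (fun _ => 1)). rewrite sumn_constk. lia.
    intros l Hl. unfold inA.
    assert (Hlev : lev (init_config n m) (n + 1) = n).
    { unfold lev. destruct (cnt_init n m (n+1) ltac:(lia) ltac:(lia)) as [A B]. lia. }
    rewrite Hlev. destruct (Z.eqb_spec l n); [reflexivity|]. destruct (Z.eqb_spec l (-m)); [reflexivity|].
    simpl. assert (exw n m (n + m + 1) (init_config n m) l = true); [|rewrite H; reflexivity].
    apply exw_spec. destruct (Z_le_gt_dec 0 l).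
    - exists (l + 1), 1. repeat split; try lia. apply Hinv; lia.
    - exists 1, (1 - l). repeat split; try lia. apply Hinv; lia. }
  lia.
Qed.

Lemma Psi_fin : forall n m c, 1 <= m <= n -> same_on_board (n + m + 1) c (final_config n m) ->
  Psi n m (n + m + 1) c (m + 1) = 1.
Proof.
  intros n m c Hnm Hs. unfold Psi.
  assert (Hinv : forall X Y, 1 <= X -> Y <= m -> inv (n + m + 1) c X Y = true).
  { intros X Y HX HY. apply inv_spec; [lia|]. exists m. destruct (cnt_fin n m c m ltac:(lia) ltac:(lia) Hs).
    repeat split; lia. }
  assert (N : noninv n m (n + m + 1) c = 0).
  { unfold noninv. apply sumn_zero. intros X HX. apply sumn_zero. intros Y HY. rewrite Hinv by lia. reflexivity. }
  assert (A : Acount n m (n + m + 1) c (m + 1) = 1).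
  { unfold Acount. rewrite (sumn_ext _ (fun l => if l =? -m then 1 else 0)).
    - rewrite sumn_single. zcase.
    - intros l Hl. unfold inA.
      assert (Hlev : lev c (m + 1) = -m).
      { unfold lev. destruct (cnt_fin n m c (m+1) ltac:(lia) ltac:(lia) Hs) as [A B]. lia. }
      rewrite Hlev, orb_diag.
      assert (exw n m (n + m + 1) c l = false).
      { destruct (exw _ _ _ _ l) eqn:E; auto. apply exw_spec in E. destruct E as [X [Y [H1 [H2 [H3 H4]]]]].
        rewrite Hinv in H4 by lia. discriminate. }
      rewrite H, orb_false_r. reflexivity. }
  lia.
Qed.

Lemma optimal : forall n m xs c, 1 <= m <= n ->
  legal_run (n + m + 1) (init_config n m) xs c -> same_on_board (n + m + 1) c (final_config n m) ->
  n * m + n + m <= Z.of_nat (length xs).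
Proof.
  intros n m xs c Hnm Hr Hs.
  assert (Hval : valid (n + m + 1) (init_config n m)).
  { intros p q Hp Hq E1 E2. unfold init_config in E1, E2. zcase; congruence. }
  destruct (run_psi n m _ _ _ _ Hr (n + 1) Hval ltac:(lia) ltac:(unfold init_config; zcase))
    as [v2 [Hv2 [Hc2 [Hval2 HP]]]].
  assert (v2 = m + 1).
  { apply (Hval2 v2 (m+1)); try lia; auto. rewrite Hs by lia. unfold final_config. zcase. }
  subst v2. rewrite Psi_init in HP by lia. rewrite Psi_fin in HP by auto. lia.
Qed.


Lemma first_move : forall n m d, 1 <= m -> d = (n + 1) - xseq n m d 1.
Proof.
  intros n m d Hm. unfold xseq. pose proof (s1_val m ltac:(lia)).
  destruct (Z.leb_spec 1 (s1 m)); [|lia].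
  rewrite (xA_closed n m d 1 0 1) by lia. change ((-1) ^ 1) with (-1). lia.
Qed.

Theorem theorem3 (n m d : Z) :
  1 <= m -> m <= n -> (d = 1 \/ d = -1) ->
  let N := n * m + n + m in
  let L := n + m + 1 in
  (* every step is legal and the final configuration is reached after step N *)
  (exists c, legal_run L (init_config n m) (xlist n m d (Z.to_nat N)) c /\
             same_on_board L c (final_config n m)) /\
  (* optimality: N is the minimum length of any legal move sequence *)
  (forall xs c, legal_run L (init_config n m) xs c ->
                same_on_board L c (final_config n m) ->
                N <= Z.of_nat (length xs)) /\
  (* d is the direction of the first move *)
  d = (n + 1) - xseq n m d 1.
Proof.
  intros H1 H2 Hd. cbv zeta. split; [apply sim_ok; auto|]. split.
  - intros xs c Hr Hs. apply (optimal n m xs c); auto.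
  - apply first_move; auto.
Qed.
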